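(* Let $n\geq 2$ and let $f,h:S^1\to S^1$ be orientation-preserving homeomorphisms satisfying $h\circ f\circ h^{-1}=f^n$. Then there exists $l\in\mathbb{N}$ such that the rotation number of $f$ is $\rho(f)=\frac{l}{n-1}$.
   Context: $\rho(f)$ denotes the Poincaré rotation number of an orientation-preserving circle homeomorphism, taken in $\mathbb{R}/\mathbb{Z}$. *)

(* Defs.v *)
From Stdlib Require Import Reals Lra ZArith.
From Coquelicot Require Import Coquelicot.
Open Scope R_scope.

(* The circle S^1 = R/Z, represented by the points of [0,1). *)
Definition circle : Type := {x : R | 0 <= x < 1}.

Lemma frac_in_unit (x : R) : 0 <= x - IZR (Int_part x) < 1.
Proof. destruct (base_Int_part x) as [H1 H2]. lra. Qed.

Definition proj (x : R) : circle := exist _ (x - IZR (Int_part x)) (frac_in_unit x).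

Definition is_lift (f : circle -> circle) (F : R -> R) : Prop :=
  (forall x, continuity_pt F x) /\
  (forall x y, x < y -> F x < F y) /\
  (forall x, F (x + 1) = F x + 1) /\
  (forall x, proj (F x) = f (proj x)).

Definition orient_pres_homeo (f : circle -> circle) : Prop :=
  exists F, is_lift f F.

Definition iterate {T : Type} (k : nat) (g : T -> T) : T -> T := Nat.iter k g.

(* rho(f) = r mod 1, where r is a real number: for every lift F of f,
   F^k(0)/k converges to a real congruent to r modulo 1. *)
Definition rotation_number_is (f : circle -> circle) (r : R) : Prop :=
  forall F, is_lift f F ->
    exists m : Z, is_lim_seq (fun k => iterate k F 0 / INR k) (r + IZR m).

(* Main.v *)
Require Import Defs.
From Stdlib Require Import Reals ZArith Lra Lia.
From Coquelicot Require Import Coquelicot.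
Open Scope R_scope.

Definition transl (G : R -> R) := forall z x, G (x + IZR z) = G x + IZR z.
Definition incr (G : R -> R) := forall x y, x < y -> G x < G y.

Lemma iter_S {T} k (g : T -> T) x : iterate (S k) g x = g (iterate k g x).
Proof. reflexivity. Qed.

Lemma iter_add {T} a b (g : T -> T) x : iterate (a + b) g x = iterate a g (iterate b g x).
Proof. induction a; simpl; [reflexivity|]. change (g (iterate (a+b) g x) = g (iterate a g (iterate b g x))). now rewrite IHa. Qed.

Lemma iter_mul {T} a b (g : T -> T) x : iterate (a * b) g x = iterate a (iterate b g) x.
Proof. induction a; [reflexivity|]. simpl. rewrite iter_add, IHa. reflexivity. Qed.

Lemma transl_of G : (forall x, G (x + 1) = G x + 1) -> transl G.
Proof.
  intros H1.
  assert (Hp : forall p x, G (x + INR p) = G x + INR p).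
  { induction p; intros x. simpl. now rewrite !Rplus_0_r.
    rewrite S_INR. replace (x + (INR p + 1)) with ((x + INR p) + 1) by ring.
    rewrite H1, IHp. ring. }
  intros z x. destruct (Z_le_gt_dec 0 z).
  - rewrite <- (Z2Nat.id z) by lia. rewrite <- INR_IZR_INZ. apply Hp.
  - assert (E : IZR z = - INR (Z.to_nat (- z))).
    { rewrite INR_IZR_INZ, Z2Nat.id by lia. rewrite opp_IZR. ring. }
    rewrite E. specialize (Hp (Z.to_nat (-z)) (x + - INR (Z.to_nat (- z)))).
    replace (x + - INR (Z.to_nat (- z)) + INR (Z.to_nat (- z))) with x in Hp by ring.
    lra.
Qed.

Lemma transl_iter G k : transl G -> transl (iterate k G).
Proof. intros HG z x. induction k; [reflexivity|]. rewrite !iter_S, IHk. apply HG. Qed.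

Lemma incr_iter G k : incr G -> incr (iterate k G).
Proof. intros HG x y Hxy. induction k; [exact Hxy|]. rewrite !iter_S. now apply HG. Qed.

Lemma incr_le G x y : incr G -> x <= y -> G x <= G y.
Proof. intros HG [H|H]. left; now apply HG. subst; lra. Qed.

Lemma bound_A G m x : incr G -> transl G ->
  iterate m G 0 - 1 <= iterate m G x - x <= iterate m G 0 + 1.
Proof.
  intros Hi Ht.
  pose proof (archimed x) as [Ha Hb].
  set (j := (up x - 1)%Z).
  assert (Hj1 : IZR j <= x) by (unfold j; rewrite minus_IZR; lra).
  assert (Hj2 : x < IZR j + 1) by (unfold j; rewrite minus_IZR; lra).
  pose proof (transl_iter G m Ht) as Htm.
  pose proof (incr_iter G m Hi) as Him.
  assert (E1 : iterate m G (0 + IZR j) = iterate m G 0 + IZR j) by apply Htm.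
  assert (E2 : iterate m G (0 + IZR (j+1)) = iterate m G 0 + IZR (j+1)) by apply Htm.
  rewrite plus_IZR in E2. rewrite Rplus_0_l in E1, E2.
  assert (L1 := incr_le _ _ _ Him Hj1).
  assert (L2 := incr_le _ _ _ Him (Rlt_le _ _ Hj2)).
  lra.
Qed.

Lemma bound_mk G m k : incr G -> transl G ->
  INR k * iterate m G 0 - INR k <= iterate (m * k) G 0 <= INR k * iterate m G 0 + INR k.
Proof.
  intros Hi Ht. induction k.
  - rewrite Nat.mul_0_r. simpl. lra.
  - rewrite Nat.mul_succ_r, Nat.add_comm, iter_add, S_INR.
    pose proof (bound_A G m (iterate (m*k) G 0) Hi Ht). lra.
Qed.

Lemma bound_pair G m k : incr G -> transl G -> (1 <= m)%nat -> (1 <= k)%nat ->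
  Rabs (iterate m G 0 / INR m - iterate k G 0 / INR k) <= / INR m + / INR k.
Proof.
  intros Hi Ht Hm Hk.
  pose proof (bound_mk G m k Hi Ht) as B1.
  pose proof (bound_mk G k m Hi Ht) as B2. rewrite Nat.mul_comm in B2.
  assert (PM : 0 < INR m) by (apply lt_0_INR; lia).
  assert (PK : 0 < INR k) by (apply lt_0_INR; lia).
  set (X := iterate (m*k) G 0) in *.
  set (u := iterate m G 0 / INR m). set (v := iterate k G 0 / INR k).
  assert (Eu : iterate m G 0 = u * INR m) by (unfold u; field; lra).
  assert (Ev : iterate k G 0 = v * INR k) by (unfold v; field; lra).
  rewrite Eu in B1. rewrite Ev in B2.
  assert (P : 0 < INR m * INR k) by nra.
  assert (INR m * INR k * (u - v) <= INR m * INR k * (/ INR m + / INR k)).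
  { replace (INR m * INR k * (/ INR m + / INR k)) with (INR k + INR m) by (field; lra). nra. }
  assert (INR m * INR k * (v - u) <= INR m * INR k * (/ INR m + / INR k)).
  { replace (INR m * INR k * (/ INR m + / INR k)) with (INR k + INR m) by (field; lra). nra. }
  apply Rabs_le. split.
  - apply Rmult_le_reg_l in H0; lra.
  - apply Rmult_le_reg_l in H; lra.
Qed.

Lemma inv_le_N (N n : nat) : (0 < N)%nat -> (N <= n)%nat -> / INR n <= / INR N.
Proof. intros. apply Rinv_le_contravar. apply lt_0_INR; lia. apply le_INR; lia. Qed.

Lemma exists_rot G : incr G -> transl G ->
  exists t, forall k, Rabs (iterate k G 0 - INR k * t) <= 1.
Proof.
  intros Hi Ht.
  set (u := fun k => iterate k G 0 / INR k).
  assert (Cu : Cauchy_crit u).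
  { intros eps Heps. destruct (archimed_cor1 (eps/2)) as [N [HN1 HN2]]; [lra|].
    exists N. intros a b Ha Hb. unfold R_dist, u.
    pose proof (bound_pair G a b Hi Ht ltac:(lia) ltac:(lia)).
    pose proof (inv_le_N N a HN2 Ha). pose proof (inv_le_N N b HN2 Hb). lra. }
  destruct (Rcomplete.R_complete u Cu) as [t Ht2].
  exists t. intros k. destruct k as [|k].
  - simpl. rewrite Rmult_0_l, Rminus_0_r, Rabs_R0. lra.
  - assert (PK : 0 < INR (S k)) by (apply lt_0_INR; lia).
    assert (Hb : Rabs (u (S k) - t) <= / INR (S k)).
    { apply Rnot_lt_le. intros Hc.
      set (e := Rabs (u (S k) - t) - / INR (S k)).
      assert (He : 0 < e) by (unfold e; lra).
      destruct (Ht2 (e/2)) as [N1 HN1]; [lra|].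
      destruct (archimed_cor1 (e/2)) as [N2 [HN2 HN2']]; [lra|].
      set (m := (N1 + N2)%nat).
      specialize (HN1 m ltac:(unfold m; lia)). unfold R_dist in HN1.
      pose proof (bound_pair G (S k) m Hi Ht ltac:(lia) ltac:(unfold m; lia)).
      pose proof (inv_le_N N2 m HN2' ltac:(unfold m; lia)).
      fold (u (S k)) in H. fold (u m) in H.
      pose proof (Rabs_triang (u (S k) - u m) (u m - t)).
      replace (u (S k) - u m + (u m - t)) with (u (S k) - t) in H1 by ring.
      unfold e in *. lra. }
    unfold u in Hb.
    replace (iterate (S k) G 0 - INR (S k) * t) with (INR (S k) * (iterate (S k) G 0 / INR (S k) - t)) by (field; lra).
    rewrite Rabs_mult, Rabs_pos_eq by lra.
    apply Rmult_le_compat_l with (r := INR (S k)) in Hb; [|lra].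
    rewrite Rinv_r in Hb by lra. exact Hb.
Qed.

Lemma zero_lemma d C : (forall k, Rabs (INR k * d) <= C) -> d = 0.
Proof.
  intros H. destruct (Req_dec d 0) as [|Hd]; [assumption|exfalso].
  assert (Pd : 0 < Rabs d) by (apply Rabs_pos_lt; exact Hd).
  assert (PC : 0 <= C) by (specialize (H 0%nat); pose proof (Rabs_pos (INR 0 * d)); lra).
  destruct (archimed_cor1 (Rabs d / (C + 1))) as [N [HN1 HN2]].
  { apply Rdiv_lt_0_compat; lra. }
  specialize (H N). rewrite Rabs_mult, Rabs_pos_eq in H by apply pos_INR.
  assert (PN : 0 < INR N) by (apply lt_0_INR; lia).
  assert (/ INR N * (C+1) < Rabs d).
  { apply Rmult_lt_compat_r with (r := C+1) in HN1; [|lra].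
    unfold Rdiv in HN1. rewrite Rmult_assoc, Rinv_l in HN1 by lra. lra. }
  apply Rmult_lt_compat_l with (r := INR N) in H0; [|lra].
  rewrite <- Rmult_assoc, Rinv_r in H0 by lra. lra.
Qed.

Lemma bound_t G t : incr G -> transl G -> (forall k, Rabs (iterate k G 0 - INR k * t) <= 1) ->
  forall k x, Rabs (iterate k G x - x - INR k * t) <= 2.
Proof.
  intros Hi Ht H k x. pose proof (bound_A G k x Hi Ht). specialize (H k).
  apply Rabs_le. apply Rabs_le_between' in H. lra.
Qed.

Lemma const_aux d a b : continuity d -> (forall x, exists z, d x = IZR z) -> a < b -> d a = d b.
Proof.
  intros Hc Hz Hab.
  destruct (Hz a) as [za Ea]. destruct (Hz b) as [zb Eb].
  destruct (Z.lt_trichotomy za zb) as [Hl|[He|Hg]].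
  - exfalso. assert (IZR za + 1 <= IZR zb) by (rewrite <- plus_IZR; apply IZR_le; lia).
    destruct (IVT (fun y => d y - (IZR za + 1/2)) a b) as [c [_ Hc2]].
    + apply continuity_minus; [exact Hc|]. apply continuity_const. intros ? ?; reflexivity.
    + exact Hab.
    + rewrite Ea; lra.
    + rewrite Eb; lra.
    + destruct (Hz c) as [zc Ec]. rewrite Ec in Hc2.
      assert (za < zc)%Z by (apply lt_IZR; lra).
      assert (zc < za + 1)%Z by (apply lt_IZR; rewrite plus_IZR; lra). lia.
  - subst. congruence.
  - exfalso. assert (IZR zb + 1 <= IZR za) by (rewrite <- plus_IZR; apply IZR_le; lia).
    destruct (IVT (fun y => (IZR zb + 1/2) - d y) a b) as [c [_ Hc2]].
    + apply continuity_minus; [|exact Hc]. apply continuity_const. intros ? ?; reflexivity.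
    + exact Hab.
    + rewrite Ea; lra.
    + rewrite Eb; lra.
    + destruct (Hz c) as [zc Ec]. rewrite Ec in Hc2.
      assert (zb < zc)%Z by (apply lt_IZR; lra).
      assert (zc < zb + 1)%Z by (apply lt_IZR; rewrite plus_IZR; lra). lia.
Qed.

Lemma const_lemma d : continuity d -> (forall x, exists z, d x = IZR z) ->
  exists c, forall x, d x = IZR c.
Proof.
  intros Hc Hz. destruct (Hz 0) as [c Ec]. exists c. intros x.
  destruct (Rtotal_order x 0) as [H|[H|H]].
  - rewrite <- Ec. now apply const_aux.
  - subst; exact Ec.
  - rewrite <- Ec. symmetry. now apply const_aux.
Qed.

Lemma proj_eq a b : proj a = proj b -> exists z, a = b + IZR z.
Proof.
  intros H. apply (f_equal (@proj1_sig _ _)) in H. simpl in H.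
  exists (Int_part a - Int_part b)%Z. rewrite minus_IZR. lra.
Qed.

Lemma proj_iter f F k x : is_lift f F -> proj (iterate k F x) = iterate k f (proj x).
Proof.
  intros [_ [_ [_ HF]]]. induction k; [reflexivity|].
  rewrite !iter_S, HF, IHk. reflexivity.
Qed.

Lemma cont_iter G k : continuity G -> continuity (iterate k G).
Proof.
  intros HG. induction k.
  - intros x; apply derivable_continuous_pt, derivable_pt_id.
  - exact (continuity_comp _ _ IHk HG).
Qed.

Lemma iter_shift G1 G2 c : transl G1 -> (forall x, G2 x = G1 x + IZR c) ->
  forall k x, iterate k G2 x = iterate k G1 x + IZR (Z.of_nat k * c).
Proof.
  intros Ht HE k x. induction k.
  - simpl. ring.
  - rewrite !iter_S, HE, IHk, Ht, Nat2Z.inj_succ, !mult_IZR, succ_IZR. ring.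
Qed.

Lemma lift_props f F : is_lift f F -> incr F /\ transl F /\ continuity F.
Proof. intros [Hc [Hi [Ht _]]]. split; [exact Hi|split; [now apply transl_of|exact Hc]]. Qed.

Theorem mainTheorem2 (n : nat) (f h : circle -> circle) :
  (2 <= n)%nat ->
  orient_pres_homeo f ->
  orient_pres_homeo h ->
  (forall x, h (f x) = iterate n f (h x)) ->
  exists l : nat, rotation_number_is f (INR l / INR (n - 1)).
Proof.
  intros Hn [F0 HF0] [H HH] Hcomm.
  destruct (lift_props _ _ HF0) as [Fi [Ft Fc]].
  destruct (lift_props _ _ HH) as [Hi [Ht Hc]].
  destruct (exists_rot F0 Fi Ft) as [t0 Ht0].
  destruct (const_lemma (fun x => H (F0 x) - iterate n F0 (H x))) as [c Ec].
  { apply continuity_minus.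
    - exact (continuity_comp _ _ Fc Hc).
    - exact (continuity_comp _ _ Hc (cont_iter F0 n Fc)). }
  { intros x. destruct (proj_eq (H (F0 x)) (iterate n F0 (H x))) as [z Ez].
    - rewrite proj_iter with (f := f) by exact HF0.
      destruct HH as [_ [_ [_ HH4]]]. destruct HF0 as [_ [_ [_ HF4]]].
      rewrite HH4, HF4, Hcomm, HH4. reflexivity.
    - exists z. lra. }
  simpl in Ec.
  set (G2 := fun x => iterate n F0 x + IZR c).
  assert (Conj : forall k, H (iterate k F0 0) = iterate k G2 (H 0)).
  { induction k; [reflexivity|]. rewrite !iter_S, <- IHk. unfold G2. specialize (Ec (iterate k F0 0)). lra. }
  assert (Sh := iter_shift (iterate n F0) G2 c (transl_iter F0 n Ft) ltac:(intros; reflexivity)).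
  assert (Bt := bound_t F0 t0 Fi Ft Ht0).
  assert (Eq0 : t0 - INR n * t0 - IZR c = 0).
  { apply zero_lemma with (C := 6). intros k.
    specialize (Conj k). rewrite Sh, <- iter_mul in Conj.
    pose proof (Bt (k*n)%nat (H 0)) as B1. rewrite mult_INR in B1.
    pose proof (Ht0 k) as B2.
    pose proof (bound_A H 1 (iterate k F0 0) Hi Ht) as B3. simpl in B3.
    rewrite mult_IZR, <- INR_IZR_INZ in Conj.
    apply Rabs_le_between' in B1. apply Rabs_le_between' in B2.
    apply Rabs_le. 
    replace (INR k * (t0 - INR n * t0 - IZR c)) with (INR k * t0 - INR k * INR n * t0 - INR k * IZR c) by ring.
    pose proof (Hi 0 1 ltac:(lra)). pose proof (Ht 1%Z 0). simpl in *. 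
    lra. }
  set (L := (- c + Z.abs c * (Z.of_nat n - 1))%Z).
  assert (HL : (0 <= L)%Z) by (unfold L; nia).
  exists (Z.to_nat L).
  assert (En1 : INR (n - 1) = INR n - 1) by (rewrite minus_INR by lia; reflexivity).
  assert (Pn : 1 < INR n) by (apply lt_1_INR; lia).
  assert (El : INR (Z.to_nat L) / INR (n - 1) = t0 + IZR (Z.abs c)).
  { rewrite INR_IZR_INZ, Z2Nat.id by exact HL. rewrite En1.
    unfold L. rewrite plus_IZR, opp_IZR, mult_IZR, minus_IZR, <- INR_IZR_INZ.
    field_simplify; [|lra]. apply Rmult_eq_reg_r with (r := INR n - 1); [|lra].
    field_simplify; [|lra]. nra. }
  rewrite El.
  intros F HF.
  destruct (lift_props _ _ HF) as [Gi [Gt Gc]].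
  destruct (const_lemma (fun x => F x - F0 x)) as [c0 Ec0].
  { apply continuity_minus; assumption. }
  { intros x. destruct (proj_eq (F x) (F0 x)) as [z Ez].
    - destruct HF as [_ [_ [_ HF4]]]. destruct HF0 as [_ [_ [_ HF4']]].
      rewrite HF4, HF4'. reflexivity.
    - exists z. lra. }
  simpl in Ec0.
  destruct (exists_rot F Gi Gt) as [t Htt].
  assert (Sh0 := iter_shift F0 F c0 Ft ltac:(intros x; specialize (Ec0 x); lra)).
  assert (Et : t - t0 - IZR c0 = 0).
  { apply zero_lemma with (C := 2). intros k.
    pose proof (Htt k) as B1. pose proof (Ht0 k) as B2. rewrite Sh0 in B1.
    rewrite mult_IZR, <- INR_IZR_INZ in B1.
    apply Rabs_le_between' in B1. apply Rabs_le_between' in B2. apply Rabs_le.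
    replace (INR k * (t - t0 - IZR c0)) with (INR k * t - INR k * t0 - INR k * IZR c0) by ring.
    lra. }
  exists (c0 - Z.abs c)%Z.
  replace (t0 + IZR (Z.abs c) + IZR (c0 - Z.abs c)) with t by (rewrite minus_IZR; lra).
  apply is_lim_seq_Reals. intros eps Heps.
  destruct (archimed_cor1 eps Heps) as [N [HN1 HN2]].
  exists N. intros k Hk. unfold R_dist.
  assert (PK : 0 < INR k) by (apply lt_0_INR; lia).
  pose proof (inv_le_N N k HN2 Hk).
  specialize (Htt k).
  replace (iterate k F 0 / INR k - t) with ((iterate k F 0 - INR k * t) / INR k) by (field; lra).
  unfold Rdiv. rewrite Rabs_mult, Rabs_inv, (Rabs_pos_eq (INR k)) by lra.
  assert (Rabs (iterate k F 0 - INR k * t) * / INR k <= 1 * / INR k).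
  { apply Rmult_le_compat_r; [left; apply Rinv_0_lt_compat; lra| exact Htt]. }
  lra.
Qed.
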